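(* Let $r\ge1$, let $x_0,y_0$ be positive integers and let $\{(X_t,Y_t)\}_{t\ge 0}$ be the CA competition process with fitness ratio $r$ started at $(x_0,y_0)$. Let $\tau_1=\inf\{t\ge 0: X_t=Y_t\}$ be the time of the first tie. Then \[ \mathbb{P}[\tau_1<\infty]\le\begin{cases}1, & x_0\le y_0,\\[2pt] \dfrac{(y_0)_{x_0-y_0}}{(rx_0+y_0)_{x_0-y_0}}\left(1+\dfrac1r\right)^{x_0-y_0}, & x_0>y_0.\end{cases} \]
   Context: The CA competition process with fitness ratio $r\ge 1$ started at $(x_0,y_0)$ is the discrete-time Markov chain $\{(X_t,Y_t)\}_{t\ge0}$ on $\{(x,y)\in\mathbb{Z}^2: x\ge1,y\ge1\}$ with $(X_0,Y_0)=(x_0,y_0)$ and transition probabilities: from $(x,y)$ it moves to $(x+1,y)$ with probability $\frac{rx}{rx+y}$ and to $(x,y+1)$ with probability $\frac{y}{rx+y}$. $(x)_k=\prod_{i=0}^{k-1}(x+i)$ denotes the Pochhammer symbol (with $(x)_0=1$); $\inf\emptyset=\infty$. *)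

(* Defs.v *)
From HB Require Import structures.
From mathcomp Require Import all_boot all_order all_algebra.
From mathcomp Require Import boolp classical_sets reals.
Set Implicit Arguments. Unset Strict Implicit. Unset Printing Implicit Defensive.
Import Order.TTheory GRing.Theory Num.Theory.
Local Open Scope ring_scope.

Section CA.
Variable R : realType.

Definition ca_step (xy : nat * nat) (b : bool) : nat * nat :=
  if b then (xy.1.+1, xy.2) else (xy.1, xy.2.+1).

Definition ca_trans (r : R) (xy : nat * nat) (b : bool) : R :=
  let x := (xy.1)%:R in let y := (xy.2)%:R in
  if b then r * x / (r * x + y) else y / (r * x + y).

Fixpoint ca_path_prob (r : R) (xy : nat * nat) (s : seq bool) : R :=
  match s with
  | [::] => 1
  | b :: s' => ca_trans r xy b * ca_path_prob r (ca_step xy b) s'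
  end.

Fixpoint ca_hits_tie (xy : nat * nat) (s : seq bool) : bool :=
  (xy.1 == xy.2) ||
  match s with
  | [::] => false
  | b :: s' => ca_hits_tie (ca_step xy b) s'
  end.

(* P[tau_1 <= n] for the process started at (x0,y0) *)
Definition ca_tie_by (r : R) (x0 y0 n : nat) : R :=
  \sum_(s : n.-tuple bool)
     (if ca_hits_tie (x0, y0) s then ca_path_prob r (x0, y0) s else 0).

(* P[tau_1 < oo] = sup_n P[tau_1 <= n]  (continuity from below) *)
Definition ca_tie_prob (r : R) (x0 y0 : nat) : R :=
  sup (range (ca_tie_by r x0 y0)).

Definition poch (a : R) (k : nat) : R := \prod_(i < k) (a + i%:R).

End CA.

(* Main.v *)
Require Import Defs.
From HB Require Import structures.
From mathcomp Require Import all_boot all_order all_algebra.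
From mathcomp Require Import boolp classical_sets reals.
From mathcomp Require Import ring lra zify.
Import Order.TTheory GRing.Theory Num.Theory.
Local Open Scope ring_scope.

Lemma sum_tuple_cons (R : realType) n (G : seq bool -> R) :
  \sum_(t : n.+1.-tuple bool) G (tval t) =
  \sum_(b : bool) \sum_(t : n.-tuple bool) G (b :: tval t).
Proof.
rewrite pair_bigA /=.
rewrite (reindex (fun p : bool * n.-tuple bool => [tuple of p.1 :: p.2])) //=.
exists (fun t : n.+1.-tuple bool => (thead t, [tuple of behead t])).
  by move=> [b t] _ /=; congr pair; apply: val_inj.
by move=> t _; rewrite [RHS]tuple_eta.
Qed.

Lemma tot_prob (R : realType) (r : R) n x y : 1 <= r -> (0 < y)%N ->
  \sum_(t : n.-tuple bool) ca_path_prob r (x, y) t = 1.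
Proof.
move=> r1; elim: n x y => [|n IH] x y y0.
  by rewrite (eq_bigr (fun _ => 1)) ?sumr_const ?card_tuple //= => t _; rewrite tuple0.
rewrite (@sum_tuple_cons _ _ (fun s => ca_path_prob r (x, y) s)) big_bool /=.
rewrite -!mulr_sumr !IH // !mulr1.
have hA : 0 < r * x%:R + y%:R.
  apply: ltr_pwDr; first by rewrite ltr0n.
  by apply: mulr_ge0; [lra | rewrite ler0n].
by rewrite -mulrDl divff // gt_eqF.
Qed.

Lemma pochSl (R : realType) (a : R) k : poch a k.+1 = a * poch (a + 1) k.
Proof.
rewrite /poch big_ord_recl /= addr0; congr (_ * _); apply: eq_bigr => i _.
by rewrite /bump /= add1n -nat1r addrA.
Qed.

Lemma pochSr (R : realType) (a : R) k : poch a k.+1 = poch a k * (a + k%:R).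
Proof. by rewrite /poch big_ord_recr. Qed.

Lemma poch_gt0 (R : realType) (a : R) k : 0 < a -> 0 < poch a k.
Proof. move=> a0; apply: prodr_gt0 => i _; apply: ltr_wpDr => //; exact: ler0n. Qed.

Lemma poch_le (R : realType) (a b : R) k : 0 <= a <= b -> poch a k <= poch b k.
Proof.
move=> /andP [a0 ab]; apply: ler_prod => i _; apply/andP; split.
  by apply: addr_ge0 => //; exact: ler0n.
by rewrite lerD2r.
Qed.

Arguments pochSl {R}. Arguments pochSr {R}. Arguments poch_gt0 {R}. Arguments poch_le {R}.

Lemma key (R : realType) (r X Y u v w C : R) :
  1 <= r -> 0 < X -> 0 < Y -> 0 < u -> 0 < v -> 0 < C ->
  (r + 1) ^+ 2 * X ^+ 2 * v <= w ->
  r * X / (r * X + Y) * ((Y * u * X) / w * (C * (1 + r^-1) * (1 + r^-1)))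
   + Y / (r * X + Y) * (u / v * C)
  <= (Y * u) / ((r * X + Y) * v) * (C * (1 + r^-1)).
Proof.
move=> r1 X0 Y0 u0 v0 C0 hw.
set A := r * X + Y; set c := 1 + r^-1.
have r0 : 0 < r by lra.
have A0 : 0 < A by rewrite /A; apply: addr_gt0 => //; exact: mulr_gt0.
have w0 : 0 < w.
  apply: lt_le_trans hw; apply: mulr_gt0 => //; apply: mulr_gt0; apply: exprn_gt0; lra.
rewrite -subr_ge0.
have -> : (Y * u) / (A * v) * (C * c) -
   (r * X / A * ((Y * u * X) / w * (C * c * c)) + Y / A * (u / v * C))
   = Y * u * C / (A * r * v * w) * (w - (r + 1) ^+ 2 * X ^+ 2 * v).
  rewrite /c; field.
  by rewrite !gt_eqF.
apply: mulr_ge0; last by rewrite subr_ge0.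
apply: divr_ge0; first by rewrite !mulr_ge0 // ltW.
by rewrite !mulr_ge0 // ltW.
Qed.

Definition Fb (R : realType) (r : R) (x y : nat) : R :=
  if (x <= y)%N then 1
  else poch (y%:R) (x - y) / poch (r * x%:R + y%:R) (x - y) * (1 + r^-1) ^+ (x - y).
Arguments Fb {R}.

Lemma superh (R : realType) (r : R) x y : 1 <= r -> (0 < y)%N -> x != y ->
  ca_trans r (x, y) true * Fb r x.+1 y + ca_trans r (x, y) false * Fb r x y.+1
  <= Fb r x y.
Proof.
move=> r1 y0 xy.
have hA : 0 < r * x%:R + y%:R.
  apply: ltr_pwDr; first by rewrite ltr0n.
  by apply: mulr_ge0; [lra | rewrite ler0n].
rewrite /ca_trans /Fb /=.
case: (ltnP x y) => hxy.
  have h1 : (x <= y.+1)%N by lia.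
  by rewrite h1 (ltnW hxy) !mulr1 -mulrDl divff ?gt_eqF.
have {}hxy : (y < x)%N by rewrite ltn_neqAle eq_sym xy.
rewrite [(x <= y)%N]leqNgt hxy /=.
have [j ->] : exists j, x = (y + j.+1)%N by exists (x - y).-1; lia.
have -> : (y + j.+1 - y = j.+1)%N by lia.
have -> : ((y + j.+1).+1 - y = j.+2)%N by lia.
have -> : (y + j.+1 - y.+1 = j)%N by lia.
have -> : (y + j.+1 <= y.+1)%N = (j == 0)%N by case: j => [|j]; apply/idP/idP; lia.
set X := (y + j.+1)%:R; set Y := y%:R; set c := 1 + r^-1.
have X0 : 0 < X :> R by rewrite ltr0n; lia.
have Y0 : 0 < Y :> R by rewrite ltr0n.
have hX : X = Y + j.+1%:R by rewrite /X natrD.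
set A := r * X + Y.
have eqYs : y.+1%:R = Y + 1 :> R by rewrite -natr1.
have eqA1 : r * X + y.+1%:R = A + 1 by rewrite eqYs /A addrA.
have eqAr : r * (y + j.+1).+1%:R + Y = A + r by rewrite /A -natr1 -/X; ring.
rewrite eqAr eqA1 eqYs.
have g2 : (if (j == 0)%N then 1 else poch (Y + 1) j / poch (A + 1) j * c ^+ j)
          = poch (Y + 1) j / poch (A + 1) j * c ^+ j.
  case: eqP => // ->; by rewrite /poch !big_ord0 divr1 expr0 mulr1.
rewrite g2.
rewrite (pochSr Y j.+1) (pochSl Y j) (pochSl A j) -hX.
rewrite !exprS.
set u := poch (Y + 1) j; set v := poch (A + 1) j; set w := poch (A + r) j.+2.
set C := c ^+ j.
have e1 : c * (c * C) = C * c * c by rewrite mulrA [LHS]mulrC mulrA.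
have e2 : c * C = C * c by rewrite [LHS]mulrC.
rewrite e1 e2.
have A0 : 0 < A by rewrite /A; apply: addr_gt0 => //; apply: mulr_gt0 => //; lra.
have v0 : 0 < v by apply: poch_gt0; apply: addr_gt0.
apply: key => //.
- by apply: poch_gt0; apply: addr_gt0.
- apply: exprn_gt0; rewrite /c; apply: addr_gt0 => //; rewrite invr_gt0; lra.
apply: le_trans (poch_le (A + 1) (A + r) j.+2 _); last first.
  by apply/andP; split; [apply: addr_ge0; lra | lra].
rewrite /w !pochSr -/v.
have eAj : A + 1 + j%:R = (r + 1) * X by rewrite /A hX -natr1; ring.
rewrite eAj -natr1 addrA eAj.
have hX1 : 0 <= (r + 1) * X by apply: mulr_ge0; lra.
rewrite -subr_ge0.
have -> : v * ((r + 1) * X) * ((r + 1) * X + 1) - (r + 1) ^+ 2 * X ^+ 2 * v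
  = v * ((r + 1) * X) by ring.
by apply: mulr_ge0 => //; lra.
Qed.

Arguments superh {R}. Arguments tot_prob {R}.

Lemma Fb_ge0 (R : realType) (r : R) x y : 1 <= r -> (0 < y)%N -> 0 <= Fb r x y.
Proof.
move=> r1 y0; rewrite /Fb; case: ifP => // hxy.
apply: mulr_ge0; last first.
  apply: exprn_ge0; apply: addr_ge0; [lra | rewrite invr_ge0; lra].
apply: divr_ge0; apply: ltW; apply: poch_gt0; first by rewrite ltr0n.
apply: ltr_pwDr; first by rewrite ltr0n.
by apply: mulr_ge0; [lra | rewrite ler0n].
Qed.

Lemma trans_ge0 (R : realType) (r : R) x y b : 1 <= r -> 0 <= ca_trans r (x, y) b.
Proof.
move=> r1; rewrite /ca_trans /=.
have h : 0 <= r * x%:R + y%:R by apply: addr_ge0 => //; apply: mulr_ge0; [lra|].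
by case: b; apply: divr_ge0 => //; apply: mulr_ge0; [lra|].
Qed.

Arguments Fb_ge0 {R}. Arguments trans_ge0 {R}.

Lemma tie_le (R : realType) (r : R) n : 1 <= r -> forall x y, (0 < y)%N ->
  ca_tie_by r x y n <= Fb r x y.
Proof.
move=> r1; elim: n => [|n IH] x y y0.
  rewrite /ca_tie_by (eq_bigr (fun _ => if x == y then 1 else 0)); last first.
    by move=> t _; rewrite tuple0 /= orbF.
  rewrite sumr_const card_tuple expn0 mulr1n.
  case: eqP => [->|_]; last exact: Fb_ge0.
  by rewrite /Fb leqnn.
rewrite /ca_tie_by (@sum_tuple_cons _ _
  (fun s => if ca_hits_tie (x, y) s then ca_path_prob r (x, y) s else 0)).
rewrite big_bool /=.
case: eqP => [exy|/eqP xy] /=.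
  subst y.
  rewrite -!mulr_sumr !tot_prob // ?mulr1.
  have -> : Fb r x x = 1 by rewrite /Fb leqnn.
  have x0 : 0 < x%:R :> R by rewrite ltr0n.
  have hA : 0 < r * x%:R + x%:R by apply: addr_gt0 => //; apply: mulr_gt0 => //; lra.
  by rewrite /ca_trans /= -mulrDl divff ?gt_eqF.
rewrite (eq_bigr (fun t : n.-tuple bool => ca_trans r (x, y) true *
   (if ca_hits_tie (x.+1, y) t then ca_path_prob r (x.+1, y) t else 0))); last first.
  by move=> t _; case: ifP; rewrite ?mulr0.
rewrite [X in _ + X <= _](eq_bigr (fun t : n.-tuple bool => ca_trans r (x, y) false *
   (if ca_hits_tie (x, y.+1) t then ca_path_prob r (x, y.+1) t else 0))); last first.
  by move=> t _; case: ifP; rewrite ?mulr0.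
rewrite -!mulr_sumr.
apply: le_trans (superh r x y r1 y0 xy).
apply: lerD; apply: ler_wpM2l; try exact: trans_ge0.
  exact: IH.
exact: IH.
Qed.

Arguments tie_le {R}.

Theorem lemma4 (R : realType) (r : R) (x0 y0 : nat) :
  1 <= r -> (0 < x0)%N -> (0 < y0)%N ->
  ca_tie_prob r x0 y0 <=
    (if (x0 <= y0)%N then 1
     else poch (y0%:R) (x0 - y0) / poch (r * x0%:R + y0%:R) (x0 - y0)
          * (1 + r^-1) ^+ (x0 - y0)).
Proof.
move=> r1 x0p y0p.
apply: ge_sup; first by exists (ca_tie_by r x0 y0 0), 0%N.
move=> z [n _ <-].
exact: (tie_le r n r1 x0 y0 y0p).
Qed.
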